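(* In the standing setup, let $\alpha=(\alpha_n)$ be a subsequence of $(p_n)$ with $\sum_{n=0}^\infty \ell_n^\alpha<+\infty$, let $\beta_n=\alpha_0\cdots\alpha_n$ and $r_n=B_\infty(\beta_n^{-1}i,\,i)$. Then $(r_n)_n$ converges to a real number $r_\alpha$, and $|r_n|\le\sum_{i=0}^\infty\ell_i^\alpha$ for all $n\ge0$; hence $|r_\alpha|\le\sum_{i=0}^\infty\ell_i^\alpha$.
   Context: Standing setup: $\mathbb H$ is the upper half-plane with distance $d$, $\partial\mathbb H=\mathbb R\cup\{\infty\}$; for $v\in T^1\mathbb H$, $v(t)$ is the unit-speed geodesic with initial vector $v$, $v(+\infty)$ its forward endpoint. Busemann function: $B_\xi(x,y)=\lim_{t\to\infty}(d(x,c(t))-d(y,c(t)))$ for a geodesic ray $c$ converging to $\xi$. For a horocycle $\tilde H$ and a parabolic isometry $p$ preserving it, $\ell(\tilde H,p)$ is the horocyclic arc length between $x$ and $px$ ($x\in\tilde H$); positive orientation is that of an arc-length parametrization with $p\tilde H(s)=\tilde H(s+\ell(\tilde H,p))$; $\tilde u$ is tangent to the oriented pair $(\tilde H,p)$ if $\tilde u(\mathbb R^+)$ is tangent to $\tilde H$ at $\tilde u(t_0)=\tilde H(s_0)$, $t_0\ge0$, with $\frac{d\tilde u}{dt}(t_0)=\frac{d\tilde H}{ds}(s_0)$ for a positively oriented parametrization. $\Gamma$ is a torsion-free Fuchsian group, $S=\Gamma\backslash\mathbb H$ has at least one cusp, $u\in T^1S$ is cusp-recurrent with lift $\tilde u$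 normalized so that $\tilde u(0)=i$, $\tilde u(+\infty)=\infty$. $(\tilde H_n,p_n)_{n\in\mathbb N}$: $p_n\in\Gamma$ parabolic with fixed point $x_n\in\mathbb R$, $\tilde H_n$ horocycle centered at $x_n$, $\tilde u$ tangent to the oriented pair $(\tilde H_n,p_n)$ at $\tilde u(t_n)$, $(t_n)$ nonnegative increasing to $+\infty$, $x_n$ positive distinct increasing to $+\infty$, horoballs bounded by the $\tilde H_n$ pairwise disjoint, $\ell(\tilde H_n,p_n)\to0$. A subsequence $\alpha$ is $\alpha_n=p_{k_n}$ ($k_n$ increasing), $\ell_n^\alpha=\ell(\tilde H_{k_n},p_{k_n})$. *)

(* Defs.v *)
From Stdlib Require Import Reals Lra.
From Coquelicot Require Import Coquelicot.
Open Scope R_scope.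

(** * Upper half-plane model.
    A point of H is a pair (x, y) : R * R, standing for x + i y, with y > 0. *)
Definition pt := (R * R)%type.
Definition inH (z : pt) : Prop := 0 < snd z.
Definition i_pt : pt := (0, 1).

Definition arcosh (u : R) : R := ln (u + sqrt (u ^ 2 - 1)).

Definition hdist (z w : pt) : R :=
  arcosh (1 + ((fst z - fst w) ^ 2 + (snd z - snd w) ^ 2) / (2 * snd z * snd w)).

(** The geodesic ray t |-> i e^t, converging to the boundary point infinity.
    This is also the normalized lift  u~  of u : u~(0) = i, u~(+oo) = oo. *)
Definition ray_inf (t : R) : pt := (0, exp t).

Definition busemann_inf (x y : pt) : R :=
  real (Lim (fun t => hdist x (ray_inf t) - hdist y (ray_inf t)) p_infty).

Record mat := Mat { ma : R; mb : R; mc : R; md : R }.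
Definition mdet (g : mat) : R := ma g * md g - mb g * mc g.
Definition mI : mat := Mat 1 0 0 1.
Definition mneg (g : mat) : mat := Mat (- ma g) (- mb g) (- mc g) (- md g).
Definition mmul (g h : mat) : mat :=
  Mat (ma g * ma h + mb g * mc h) (ma g * mb h + mb g * md h)
      (mc g * ma h + md g * mc h) (mc g * mb h + md g * md h).
(** inverse in SL(2,R) (adjugate) *)
Definition minv (g : mat) : mat := Mat (md g) (- mb g) (- mc g) (ma g).
Fixpoint mpow (g : mat) (n : nat) : mat :=
  match n with O => mI | S n => mmul g (mpow g n) end.
Definition mtrace (g : mat) : R := ma g + md g.
Definition mdist (g h : mat) : R :=
  Rabs (ma g - ma h) + Rabs (mb g - mb h) + Rabs (mc g - mc h) + Rabs (md g - md h).

(** Moebius action z |-> (a z + b) / (c z + d) on the upper half-plane. *)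
Definition mob (g : mat) (z : pt) : pt :=
  let x := fst z in let y := snd z in
  let den := (mc g * x + md g) ^ 2 + (mc g * y) ^ 2 in
  (((ma g * x + mb g) * (mc g * x + md g) + ma g * mc g * y ^ 2) / den,
   mdet g * y / den).

(** g (as an isometry of H, extended to the boundary) fixes the real point x:
    (a x + b)/(c x + d) = x. *)
Definition fixes_real (g : mat) (x : R) : Prop :=
  mc g * x ^ 2 + (md g - ma g) * x - mb g = 0.

(** Parabolic isometry: non-trivial in PSL(2,R), with |trace| = 2. *)
Definition parabolic (g : mat) : Prop :=
  mdet g = 1 /\ Rabs (mtrace g) = 2 /\ g <> mI /\ g <> mneg mI.

(** Torsion-free Fuchsian group, given by its (discrete) preimage in SL(2,R). *)
Definition fuchsian (G : mat -> Prop) : Prop :=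
  (forall g, G g -> mdet g = 1) /\
  G mI /\
  (forall g h, G g -> G h -> G (mmul g h)) /\
  (forall g, G g -> G (minv g)) /\
  (exists eps, 0 < eps /\ forall g, G g -> mdist g mI < eps -> g = mI).

Definition torsion_free (G : mat -> Prop) : Prop :=
  forall g n, G g -> (1 <= n)%nat ->
    (mpow g n = mI \/ mpow g n = mneg mI) -> (g = mI \/ g = mneg mI).

(** * Horocycles centred at a real point.
    The horocycle centred at x in R of Euclidean radius r > 0 is the Euclidean
    circle of centre (x, r) and radius r (tangent to R at x), minus x. *)
Definition on_horo (x r : R) (z : pt) : Prop :=
  inH z /\ (fst z - x) ^ 2 + (snd z - r) ^ 2 = r ^ 2.
Definition in_horoball (x r : R) (z : pt) : Prop :=
  inH z /\ (fst z - x) ^ 2 + (snd z - r) ^ 2 < r ^ 2.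

Definition arclength_param (x r : R) (gam : R -> pt) (v1 v2 : R -> R) : Prop :=
  (forall s, on_horo x r (gam s)) /\
  (forall z, on_horo x r z -> exists s, gam s = z) /\
  (forall s s', gam s = gam s' -> s = s') /\
  (forall s, is_derive (fun u => fst (gam u)) s (v1 s)) /\
  (forall s, is_derive (fun u => snd (gam u)) s (v2 s)) /\
  (forall s, sqrt (v1 s ^ 2 + v2 s ^ 2) / snd (gam s) = 1).

(** Positively oriented arc-length parametrization of the oriented pair (H, p),
    with l = l(H, p) the horocyclic length between z and p z:
    p H(s) = H(s + l). *)
Definition pos_param (x r : R) (p : mat) (l : R) (gam : R -> pt) (v1 v2 : R -> R)
  : Prop :=
  arclength_param x r gam v1 v2 /\ 0 <= l /\ forall s, mob p (gam s) = gam (s + l).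

Definition horo_length (x r : R) (p : mat) (l : R) : Prop :=
  exists gam v1 v2, pos_param x r p l gam v1 v2.

(** Note du~/dt (t) = (0, e^t). *)
Definition tangent_to_pair (x r : R) (p : mat) (t0 : R) : Prop :=
  0 <= t0 /\
  exists l gam v1 v2 s0, pos_param x r p l gam v1 v2 /\
    gam s0 = ray_inf t0 /\ v1 s0 = 0 /\ v2 s0 = exp t0.

Fixpoint prod_upto (f : nat -> mat) (n : nat) : mat :=
  match n with
  | O => f O
  | S m => mmul (prod_upto f m) (f (S m))
  end.

(* Main.v *)
Require Import Defs.
From Stdlib Require Import Reals Lra Psatz.
From Coquelicot Require Import Coquelicot.
Open Scope R_scope.

Lemma den_pos (g : mat) (X Y : R) : mdet g <> 0 -> 0 < Y ->
  0 < (mc g * X + md g) ^ 2 + (mc g * Y) ^ 2.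
Proof.
  intros Hd HY. destruct g as [a b c d]; unfold mdet in *; simpl in *.
  destruct (Req_dec c 0) as [Hc|Hc].
  - subst. assert (d <> 0) by (intro; subst; apply Hd; ring).
    assert (0 < d^2) by (apply pow2_gt_0; auto). nra.
  - assert (0 < (c*Y)^2) by (apply pow2_gt_0; apply Rmult_integral_contrapositive; split; lra).
    assert (0 <= (c*X+d)^2) by apply pow2_ge_0. lra.
Qed.

Lemma mob_snd_pos g z : mdet g = 1 -> inH z -> inH (mob g z).
Proof.
  intros Hd Hz. unfold inH, mob in *; simpl.
  rewrite Hd. apply Rdiv_lt_0_compat. lra. apply den_pos; auto; lra.
Qed.

Lemma mdet_mmul g h : mdet (mmul g h) = mdet g * mdet h.
Proof. destruct g, h; unfold mdet, mmul; simpl; ring. Qed.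

Lemma minv_mmul g h : minv (mmul g h) = mmul (minv h) (minv g).
Proof. destruct g, h; unfold minv, mmul; simpl; f_equal; ring. Qed.

Lemma mdet_minv g : mdet (minv g) = mdet g.
Proof. destruct g; unfold mdet, minv; simpl; ring. Qed.

Lemma mob_mmul A B z : mdet A = 1 -> mdet B = 1 -> inH z ->
  mob (mmul A B) z = mob A (mob B z).
Proof.
  intros HA HB Hz.
  pose proof (den_pos B (fst z) (snd z) ltac:(lra) Hz) as D1.
  pose proof (mob_snd_pos B z HB Hz) as Hz'.
  pose proof (den_pos A (fst (mob B z)) (snd (mob B z)) ltac:(lra) Hz') as D2.
  assert (HAB : mdet (mmul A B) = 1) by (rewrite mdet_mmul, HA, HB; ring).
  pose proof (den_pos (mmul A B) (fst z) (snd z) ltac:(lra) Hz) as D3.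
  destruct A as [a b c d], B as [a' b' c' d'], z as [X Y].
  unfold mob, mdet, mmul, inH in *; cbn [fst snd ma mb mc md] in *.
  set (E := (c' * X + d') ^ 2 + (c' * Y) ^ 2) in *.
  assert (E <> 0) by lra.
  assert (KEY : (c * (((a' * X + b') * (c' * X + d') + a' * c' * Y ^ 2) / E) + d) ^ 2 +
     (c * ((a' * d' - b' * c') * Y / E)) ^ 2 = ((( c * a' + d * c') * X + (c * b' + d * d')) ^ 2 + ((c * a' + d * c') * Y) ^ 2) / E).
  { field_simplify; auto. unfold E. field. auto. }
  rewrite KEY. f_equal.
  - unfold E in *. field. split; lra.
  - unfold E in *. field. split; lra.
Qed.
Lemma step_lemma (p : mat) (e h x X Y : R) :
  e * e = 1 -> 0 <= h -> 0 < x -> 0 < Y -> 0 <= X -> X ^ 2 + Y ^ 2 <= x ^ 2 ->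
  ma p = e * (1 + h) -> mb p = - (e * x * h) -> mc p = e * h / x -> md p = e * (1 - h) ->
  let z' := mob (minv p) (X, Y) in
  0 <= fst z' /\ fst z' ^ 2 + snd z' ^ 2 <= x ^ 2 /\ 0 < snd z' /\
  exists N, Y = snd z' * N /\ 1 <= N <= 1 + 2 * h + 2 * h ^ 2.
Proof.
  intros He Hh Hx HY HX Hr Ha Hb Hc Hd z'.
  set (N := (1 + h - h * X / x) ^ 2 + (h * Y / x) ^ 2).
  assert (Hx0 : x <> 0) by lra.
  assert (HN1 : 1 <= N).
  { assert (HXx : X <= x) by nra.
    assert (0 <= h * (1 - X / x)).
    { apply Rmult_le_pos; auto. assert (X / x <= 1).
      { apply Rmult_le_reg_r with x; auto. field_simplify; lra. } lra. }
    unfold N. assert (0 <= (h * Y / x) ^ 2) by apply pow2_ge_0.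
    assert (1 + h - h * X / x = 1 + h * (1 - X / x)) by (field; auto).
    rewrite H1. nra. }
  assert (HN0 : 0 < N) by lra.
  assert (Hden : (- mc p * X + ma p) ^ 2 + (- mc p * Y) ^ 2 = N).
  { rewrite Hc, Ha. unfold N.
    transitivity ((e * e) * ((1 + h - h * X / x) ^ 2 + (h * Y / x) ^ 2)); [field; auto|].
    rewrite He; ring. }
  assert (Hdet : md p * ma p - - mb p * - mc p = 1).
  { rewrite Ha, Hb, Hc, Hd.
    transitivity (e * e); [field; auto | auto]. }
  assert (E1 : fst z' = ((md p * X + - mb p) * (- mc p * X + ma p) + md p * - mc p * Y ^ 2) / N).
  { unfold z', mob, minv; cbn [fst snd ma mb mc md]. rewrite <- Hden. reflexivity. }
  assert (E2 : snd z' = Y / N).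
  { unfold z', mob, minv, mdet; cbn [fst snd ma mb mc md]. rewrite Hden, Hdet. field. lra. }
  assert (Nf : x * ((md p * X + - mb p) * (- mc p * X + ma p) + md p * - mc p * Y ^ 2)
     = X * x + h * (x ^ 2 - X ^ 2 - Y ^ 2) + h ^ 2 * ((x - X) ^ 2 + Y ^ 2)).
  { rewrite Ha, Hb, Hc, Hd.
    transitivity ((e * e) * (((1 - h) * X + x * h) * (x * (1 + h) - h * X) - (1 - h) * h * Y ^ 2)); [field; auto|].
    rewrite He. ring. }
  assert (Nm : x ^ 2 * N - (((md p * X + - mb p) ^ 2) + (md p * Y) ^ 2)
     = (x ^ 2 - X ^ 2 - Y ^ 2) + 2 * h * ((x - X) ^ 2 + Y ^ 2)).
  { rewrite Hb, Hd. unfold N.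
    transitivity (x ^ 2 * ((1 + h - h * X / x) ^ 2 + (h * Y / x) ^ 2) - (e * e) * (((1 - h) * X + x * h) ^ 2 + ((1 - h) * Y) ^ 2)); [ring|].
    rewrite He. field. auto. }
  assert (Fid : (fst z') ^ 2 + (snd z') ^ 2 = (((md p * X + - mb p) ^ 2) + (md p * Y) ^ 2) / N).
  { rewrite E1, E2.
    assert (G : forall a b c d : R, ((a * X + b) * (c * X + d) + a * c * Y ^ 2) ^ 2 + ((a * d - b * c) * Y) ^ 2
       = ((a * X + b) ^ 2 + (a * Y) ^ 2) * ((c * X + d) ^ 2 + (c * Y) ^ 2)) by (intros; ring).
    pose proof (G (md p) (- mb p) (- mc p) (ma p)) as G'. rewrite Hdet, Hden in G'.
    apply Rmult_eq_reg_r with (N ^ 2). 2: { apply pow_nonzero; lra. }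
    replace ((((md p * X + - mb p) * (- mc p * X + ma p) + md p * - mc p * Y ^ 2) / N) ^ 2 + (Y / N) ^ 2) with
      ((((md p * X + - mb p) * (- mc p * X + ma p) + md p * - mc p * Y ^ 2) ^ 2 + (1 * Y) ^ 2) / N ^ 2) by (field; lra).
    rewrite G'. field. lra. }
  split; [|split; [|split]].
  - rewrite E1. apply Rdiv_le_0_compat; auto.
    apply Rmult_le_reg_l with x; auto. rewrite Rmult_0_r, Nf.
    assert (0 <= h ^ 2 * ((x - X) ^ 2 + Y ^ 2)) by (apply Rmult_le_pos; nra).
    assert (0 <= h * (x ^ 2 - X ^ 2 - Y ^ 2)) by (apply Rmult_le_pos; nra). nra.
  - rewrite Fid. apply Rmult_le_reg_r with N; auto.
    unfold Rdiv. rewrite Rmult_assoc, Rinv_l, Rmult_1_r by lra.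
    assert (0 <= 2 * h * ((x - X) ^ 2 + Y ^ 2)) by (apply Rmult_le_pos; nra). nra.
  - rewrite E2. apply Rdiv_lt_0_compat; auto.
  - exists N. split; [rewrite E2; field; lra|split; auto].
    unfold N. set (u := X / x). set (v := Y / x).
    assert (Hu : 0 <= u) by (unfold u; apply Rdiv_le_0_compat; lra).
    assert (Huv : u ^ 2 + v ^ 2 <= 1).
    { unfold u, v. replace ((X / x) ^ 2 + (Y / x) ^ 2) with ((X ^ 2 + Y ^ 2) / x ^ 2) by (field; auto).
      apply Rmult_le_reg_r with (x ^ 2). apply pow_lt; auto.
      unfold Rdiv. rewrite Rmult_assoc, Rinv_l, Rmult_1_r. lra. apply pow_nonzero; auto. }
    replace (h * X / x) with (h * u) by (unfold u; field; auto).
    replace (h * Y / x) with (h * v) by (unfold v; field; auto).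
    assert (0 <= h * (1 + h) * u) by (apply Rmult_le_pos; nra).
    assert (h ^ 2 * (u ^ 2 + v ^ 2) <= h ^ 2) by (apply (Rmult_le_compat_l (h ^ 2)) in Huv; [lra| apply pow2_ge_0]).
    nra.
Qed.
Definition Pf (X Y e : R) : R := (X ^ 2 + Y ^ 2) / (2 * Y) * e ^ 2 + / (2 * Y).
Definition Gf (X Y e : R) : R := ln (Pf X Y e + sqrt (Pf X Y e ^ 2 - e ^ 2)).

Lemma Pf_ge (X Y e : R) : 0 < Y -> 0 < e -> e <= Pf X Y e.
Proof.
  intros HY He. unfold Pf.
  apply Rmult_le_reg_l with (2 * Y). lra.
  replace (2 * Y * ((X ^ 2 + Y ^ 2) / (2 * Y) * e ^ 2 + / (2 * Y))) with ((X ^ 2 + Y ^ 2) * e ^ 2 + 1) by (field; lra).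
  assert (0 <= (Y * e - 1) ^ 2) by apply pow2_ge_0.
  assert (0 <= (X * e) ^ 2) by apply pow2_ge_0. nra.
Qed.

Lemma Pf_pos X Y e : 0 < Y -> 0 < Pf X Y e.
Proof.
  intros HY. unfold Pf. assert (0 < / (2 * Y)) by (apply Rinv_0_lt_compat; lra).
  assert (0 <= (X ^ 2 + Y ^ 2) / (2 * Y) * e ^ 2).
  { apply Rmult_le_pos. apply Rdiv_le_0_compat; nra. apply pow2_ge_0. } lra.
Qed.

Lemma hdist_ray (X Y t : R) : 0 < Y ->
  hdist (X, Y) (ray_inf t) = t + Gf X Y (exp (- t)).
Proof.
  intros HY. unfold hdist, arcosh, ray_inf, Gf. cbn [fst snd].
  set (e := exp (- t)). assert (He : 0 < e) by apply exp_pos.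
  assert (Ht : exp t = / e) by (unfold e; rewrite exp_Ropp; field; apply Rgt_not_eq, exp_pos).
  rewrite Ht.
  set (A := 1 + ((X - 0) ^ 2 + (Y - / e) ^ 2) / (2 * Y * / e)).
  assert (HA : A = Pf X Y e / e) by (unfold A, Pf; field; lra).
  pose proof (Pf_ge X Y e HY He). pose proof (Pf_pos X Y e HY).
  assert (HS : sqrt (A ^ 2 - 1) = sqrt (Pf X Y e ^ 2 - e ^ 2) / e).
  { rewrite HA. replace ((Pf X Y e / e) ^ 2 - 1) with ((Pf X Y e ^ 2 - e ^ 2) / (e * e)) by (field; lra).
    rewrite sqrt_div. rewrite sqrt_square; lra. nra. nra. }
  rewrite HS, HA.
  replace (Pf X Y e / e + sqrt (Pf X Y e ^ 2 - e ^ 2) / e) with ((Pf X Y e + sqrt (Pf X Y e ^ 2 - e ^ 2)) / e) by (field; lra).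
  rewrite ln_div; auto.
  - unfold e. rewrite ln_exp. ring.
  - pose proof (sqrt_pos (Pf X Y e ^ 2 - e ^ 2)). lra.
Qed.

Lemma Gf_cont X Y : 0 < Y -> continuity_pt (Gf X Y) 0.
Proof.
  intros HY.
  assert (CP : forall e, continuity_pt (Pf X Y) e).
  { intros e. unfold Pf. reg. }
  assert (CQ : continuity_pt (fun e => Pf X Y e ^ 2 - e ^ 2) 0).
  { apply continuity_pt_minus. apply continuity_pt_comp with (f2 := fun u => u ^ 2) (f1 := Pf X Y); auto. reg.
    reg. }
  assert (P0 : Pf X Y 0 = / (2 * Y)) by (unfold Pf; ring).
  assert (Q0 : 0 < Pf X Y 0 ^ 2 - 0 ^ 2).
  { rewrite P0. assert (0 < / (2 * Y)) by (apply Rinv_0_lt_compat; lra). nra. }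
  unfold Gf.
  apply continuity_pt_comp with (f1 := fun e => Pf X Y e + sqrt (Pf X Y e ^ 2 - e ^ 2)) (f2 := ln).
  - apply continuity_pt_plus; auto.
    apply continuity_pt_comp with (f1 := fun e => Pf X Y e ^ 2 - e ^ 2) (f2 := sqrt); auto.
    apply sqrt_continuity_pt. auto.
  - apply derivable_continuous_pt. exists (/ (Pf X Y 0 + sqrt (Pf X Y 0 ^ 2 - 0 ^ 2))).
    apply derivable_pt_lim_ln. pose proof (sqrt_pos (Pf X Y 0 ^ 2 - 0 ^ 2)). pose proof (Pf_pos X Y 0 HY). lra.
Qed.

Lemma Gf_0 X Y : 0 < Y -> Gf X Y 0 = - ln Y.
Proof.
  intros HY. unfold Gf. replace (Pf X Y 0) with (/ (2 * Y)) by (unfold Pf; ring).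
  replace ((/ (2 * Y)) ^ 2 - 0 ^ 2) with (/ (2 * Y) * / (2 * Y)) by (field; lra).
  rewrite sqrt_square. 2: { assert (0 < / (2 * Y)) by (apply Rinv_0_lt_compat; lra). lra. }
  replace (/ (2 * Y) + / (2 * Y)) with (/ Y) by (field; lra).
  rewrite ln_Rinv; auto.
Qed.

Lemma busemann_val (z : pt) : inH z -> busemann_inf z i_pt = - ln (snd z).
Proof.
  destruct z as [X Y]. unfold inH. cbn [snd]. intros HY.
  unfold busemann_inf.
  assert (L : is_lim (fun t => hdist (X, Y) (ray_inf t) - hdist i_pt (ray_inf t)) p_infty (- ln Y)).
  { apply is_lim_ext with (f := fun t => Gf X Y (exp (- t)) - Gf 0 1 (exp (- t))).
    { intros t. unfold i_pt. rewrite !hdist_ray by lra. ring. }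
    assert (Le : is_lim (fun t => exp (- t)) p_infty 0).
    { apply (is_lim_comp (fun y => exp y) (fun t => - t) p_infty 0 m_infty).
      apply is_lim_exp_m.
      apply (is_lim_opp (fun t => t) p_infty p_infty). apply is_lim_id.
      exists 0. intros y _. discriminate. }
    replace (- ln Y) with (Gf X Y 0 - Gf 0 1 0).
    2: { rewrite Gf_0, Gf_0, ln_1 by lra. ring. }
    apply (is_lim_minus _ _ p_infty (Gf X Y 0) (Gf 0 1 0)).
    - eapply filterlim_comp. apply Le. apply continuity_pt_filterlim. apply Gf_cont. lra.
    - eapply filterlim_comp. apply Le. apply continuity_pt_filterlim. apply Gf_cont. lra.
    - reflexivity. }
  rewrite (is_lim_unique _ _ _ L). reflexivity.
Qed.
Lemma circle_tangent x r gam v1 v2 : arclength_param x r gam v1 v2 ->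
  forall s, (fst (gam s) - x) * v1 s + (snd (gam s) - r) * v2 s = 0.
Proof.
  intros [Hon [_ [_ [D1 [D2 _]]]]] s.
  set (g1 := fun u => fst (gam u)). set (g2 := fun u => snd (gam u)).
  assert (Hd : is_derive (fun u => (g1 u - x) * (g1 u - x) + (g2 u - r) * (g2 u - r)) s
     (2 * ((g1 s - x) * v1 s + (g2 s - r) * v2 s))).
  { auto_derive.
    - repeat split; eexists; [apply D1|apply D1|apply D2|apply D2].
    - replace (Derive (fun x0 => g1 x0) s) with (v1 s) by (symmetry; apply is_derive_unique; apply D1).
      replace (Derive (fun x0 => g2 x0) s) with (v2 s) by (symmetry; apply is_derive_unique; apply D2).
      ring. }
  assert (Hc : is_derive (fun u => (g1 u - x) * (g1 u - x) + (g2 u - r) * (g2 u - r)) s 0).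
  { apply is_derive_ext with (f := fun _ => r ^ 2).
    - intros u. destruct (Hon u) as [_ Hu]. unfold g1, g2. cbv beta. rewrite <- Hu. match goal with |- ?a = ?b => change (@eq R a b) end. ring.
    - apply (is_derive_const (r ^ 2) s). }
  pose proof (is_derive_unique _ _ _ Hd) as E1. pose proof (is_derive_unique _ _ _ Hc) as E2.
  rewrite E1 in E2. unfold g1, g2 in E2. lra.
Qed.

Lemma speed_sq x r gam v1 v2 : arclength_param x r gam v1 v2 ->
  forall s, v1 s ^ 2 + v2 s ^ 2 = snd (gam s) ^ 2 /\ 0 < snd (gam s).
Proof.
  intros [Hon [_ [_ [_ [_ Hs]]]]] s.
  destruct (Hon s) as [Hp _]. unfold inH in Hp. split; auto.
  specialize (Hs s).
  assert (Q : sqrt (v1 s ^ 2 + v2 s ^ 2) = snd (gam s)).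
  { apply Rmult_eq_reg_r with (/ snd (gam s)). rewrite Rinv_r by lra. exact Hs.
    apply Rinv_neq_0_compat; lra. }
  rewrite <- Q. rewrite pow2_sqrt; auto.
  assert (0 <= v1 s ^ 2) by apply pow2_ge_0. assert (0 <= v2 s ^ 2) by apply pow2_ge_0. lra.
Qed.

Definition ff (x : R) (z : pt) : R := (x - fst z) / (2 * x * snd z).

Definition dff (x : R) (gam : R -> pt) (v1 v2 : R -> R) (s : R) : R :=
  ((- v1 s) * (2 * x * snd (gam s)) - (x - fst (gam s)) * (2 * x * v2 s)) / (2 * x * snd (gam s)) ^ 2.

Lemma ff_derive x gam v1 v2 : 0 < x -> arclength_param x x gam v1 v2 ->
  forall s, is_derive (fun u => ff x (gam u)) s (dff x gam v1 v2 s).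
Proof.
  intros Hx Ha s. pose proof (speed_sq _ _ _ _ _ Ha s) as [_ Hp].
  destruct Ha as [_ [_ [_ [D1 [D2 _]]]]].
  set (g1 := fun u => fst (gam u)) in *. set (g2 := fun u => snd (gam u)) in *.
  apply is_derive_ext with (f := fun u => (x - g1 u) / (2 * x * g2 u)).
  { intros t. reflexivity. }
  unfold dff. fold (g1 s). fold (g2 s).
  auto_derive.
  - assert (2 * x * g2 s <> 0) by (unfold g2; apply Rgt_not_eq; apply Rmult_lt_0_compat; lra).
    repeat split; try (eexists; first [apply D1 | apply D2]); auto.
  - replace (Derive (fun x0 => g1 x0) s) with (v1 s) by (symmetry; apply is_derive_unique; apply D1).
    replace (Derive (fun x0 => g2 x0) s) with (v2 s) by (symmetry; apply is_derive_unique; apply D2).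
    assert (2 * x * g2 s <> 0) by (unfold g2; apply Rgt_not_eq; apply Rmult_lt_0_compat; lra).
    field. split; [unfold g2; lra | lra].
Qed.

Lemma dff_vals x gam v1 v2 : 0 < x -> arclength_param x x gam v1 v2 ->
  forall s, dff x gam v1 v2 s = / (2 * x) \/ dff x gam v1 v2 s = - / (2 * x).
Proof.
  intros Hx Ha s.
  pose proof (circle_tangent _ _ _ _ _ Ha s) as T.
  pose proof (speed_sq _ _ _ _ _ Ha s) as [S Hb].
  destruct Ha as [Hon _]. destruct (Hon s) as [_ C].
  unfold dff.
  set (a := fst (gam s) - x) in *. set (b := snd (gam s)) in *.
  set (p := v1 s) in *. set (q := v2 s) in *.
  set (E := - p * b + a * q).
  assert (HD : (- p * (2 * x * b) - (x - fst (gam s)) * (2 * x * q)) / (2 * x * b) ^ 2 = E / (2 * x * b ^ 2)).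
  { unfold E, a. field. lra. }
  rewrite HD.
  assert (E1 : a * E = x * b * q).
  { assert (a * E = q * (a ^ 2 + (b - x) ^ 2 - x ^ 2 + b * x) - b * (a * p + (b - x) * q)) by (unfold E; ring).
    rewrite H, T, C. ring. }
  assert (E2 : (b - x) * E = - (x * b * p)).
  { assert ((b - x) * E = - p * (a ^ 2 + (b - x) ^ 2 - x ^ 2 + b * x) + a * (a * p + (b - x) * q)) by (unfold E; ring).
    rewrite H, T, C. ring. }
  assert (E3 : x ^ 2 * E ^ 2 = x ^ 2 * b ^ 4).
  { rewrite <- C at 1.
    replace ((a ^ 2 + (b - x) ^ 2) * E ^ 2) with ((a * E) ^ 2 + ((b - x) * E) ^ 2) by ring.
    rewrite E1, E2. replace (b ^ 4) with (b ^ 2 * (p ^ 2 + q ^ 2)) by (rewrite S; ring). ring. }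
  assert (E4 : E ^ 2 = b ^ 4).
  { apply Rmult_eq_reg_l with (x ^ 2). exact E3. apply pow_nonzero; lra. }
  assert (E5 : (E / (2 * x * b ^ 2) - / (2 * x)) * (E / (2 * x * b ^ 2) + / (2 * x)) = 0).
  { replace ((E / (2 * x * b ^ 2) - / (2 * x)) * (E / (2 * x * b ^ 2) + / (2 * x)))
      with ((E ^ 2 - b ^ 4) / (2 * x * b ^ 2) ^ 2) by (field; lra).
    rewrite E4. field. lra. }
  apply Rmult_integral in E5. destruct E5; [left|right]; lra.
Qed.
Lemma loc_dec f m l : derivable_pt_lim f m l -> l < 0 ->
  forall d, 0 < d -> exists h, 0 < h < d /\ f (m + h) < f m.
Proof.
  intros Hd Hl d Hdp.
  destruct (Hd (- l / 2) ltac:(lra)) as [del Hdel].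
  set (h := Rmin del d / 2).
  assert (Hm : 0 < Rmin del d) by (apply Rmin_pos; [apply cond_pos|lra]).
  assert (Hh : 0 < h) by (unfold h; lra).
  assert (Hh2 : h < Rmin del d) by (unfold h; lra).
  exists h. split. split; auto. pose proof (Rmin_r del d); lra.
  specialize (Hdel h ltac:(lra)). rewrite Rabs_right in Hdel by lra.
  assert (Hlt : Rabs ((f (m + h) - f m) / h - l) < - l / 2).
  { apply Hdel. pose proof (Rmin_l del d). lra. }
  apply Rabs_def2 in Hlt. destruct Hlt as [H1 H2].
  assert ((f (m + h) - f m) / h < 0) by lra.
  assert (f (m + h) - f m < 0).
  { apply Rmult_lt_reg_r with (/ h). apply Rinv_0_lt_compat; lra. rewrite Rmult_0_l. exact H. }
  lra.
Qed.

Lemma loc_inc f m l : derivable_pt_lim f m l -> 0 < l ->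
  forall d, 0 < d -> exists h, 0 < h < d /\ f (m - h) < f m.
Proof.
  intros Hd Hl d Hdp.
  destruct (Hd (l / 2) ltac:(lra)) as [del Hdel].
  set (h := Rmin del d / 2).
  assert (Hm : 0 < Rmin del d) by (apply Rmin_pos; [apply cond_pos|lra]).
  assert (Hh : 0 < h) by (unfold h; lra).
  assert (Hh2 : h < Rmin del d) by (unfold h; lra).
  exists h. split. split; auto. pose proof (Rmin_r del d); lra.
  assert (Hlt : Rabs ((f (m + - h) - f m) / - h - l) < l / 2).
  { apply Hdel. lra. rewrite Rabs_Ropp, Rabs_right by lra. pose proof (Rmin_l del d). lra. }
  apply Rabs_def2 in Hlt. destruct Hlt as [H1 H2].
  assert (0 < (f (m + - h) - f m) / - h) by lra.
  assert (0 < (f (m + - h) - f m) * - / h).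
  { unfold Rdiv in H. rewrite <- Ropp_inv_permute in H by lra. exact H. }
  assert (0 < / h) by (apply Rinv_0_lt_compat; lra).
  assert (f (m + - h) - f m < 0) by nra.
  replace (m - h) with (m + - h) by ring. lra.
Qed.

Lemma darboux0 f df a b : (forall s, is_derive f s (df s)) -> a < b -> df a < 0 -> 0 < df b ->
  exists c, a < c < b /\ df c = 0.
Proof.
  intros Hd Hab Ha Hb.
  assert (HD : forall s, derivable_pt_lim f s (df s)) by (intros; apply is_derive_Reals, Hd).
  assert (HC : forall s, continuity_pt f s).
  { intros s. apply derivable_continuous_pt. exists (df s). apply HD. }
  destruct (continuity_ab_min f a b ltac:(lra) (fun c _ => HC c)) as [m [Hmin Hm]].
  assert (Hma : m <> a).
  { intros ->. destruct (loc_dec f a (df a) (HD a) Ha (b - a) ltac:(lra)) as [h [Hh Hf]].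
    specialize (Hmin (a + h) ltac:(lra)). lra. }
  assert (Hmb : m <> b).
  { intros ->. destruct (loc_inc f b (df b) (HD b) Hb (b - a) ltac:(lra)) as [h [Hh Hf]].
    specialize (Hmin (b - h) ltac:(lra)). lra. }
  exists m. split. lra.
  destruct (Rtotal_order (df m) 0) as [Hl|[He|Hg]]; auto.
  - destruct (loc_dec f m (df m) (HD m) Hl (b - m) ltac:(lra)) as [h [Hh Hf]].
    specialize (Hmin (m + h) ltac:(lra)). lra.
  - destruct (loc_inc f m (df m) (HD m) Hg (m - a) ltac:(lra)) as [h [Hh Hf]].
    specialize (Hmin (m - h) ltac:(lra)). lra.
Qed.

Lemma mvt_pt f df a b : (forall s, is_derive f s (df s)) -> a <= b ->
  exists c, a <= c <= b /\ f b - f a = df c * (b - a).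
Proof.
  intros Hd Hab.
  destruct (MVT_gen f a b df) as [c [Hc E]].
  - intros; apply Hd.
  - intros. apply derivable_continuous_pt. exists (df x). apply is_derive_Reals, Hd.
  - exists c. rewrite Rmin_left, Rmax_right in Hc by lra. auto.
Qed.

Lemma mat_form p x : parabolic p -> fixes_real p x ->
  exists e c, e * e = 1 /\ ma p = e + c * x /\ md p = e - c * x /\ mb p = - (c * x ^ 2) /\ mc p = c.
Proof.
  intros [Hdet [Htr _]] Hf. destruct p as [a b c d]. unfold mdet, mtrace, fixes_real in *; cbn [ma mb mc md] in *.
  assert (He : exists e, e * e = 1 /\ a + d = 2 * e).
  { destruct (Rle_or_lt 0 (a + d)) as [H|H].
    - rewrite Rabs_right in Htr by lra. exists 1. lra.
    - rewrite Rabs_left in Htr by lra. exists (-1). lra. }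
  destruct He as [e [He1 He2]].
  set (del := a - e).
  assert (Hb : b = c * x ^ 2 + (d - a) * x) by lra.
  assert (Hsq : (del - c * x) ^ 2 = 0).
  { replace a with (e + del) in Hdet by (unfold del; ring).
    replace d with (e - del) in Hdet by (unfold del; lra).
    rewrite Hb in Hdet. unfold del in *.
    replace d with (2 * e - a) in Hdet by lra. nra. }
  assert (Hd0 : del = c * x).
  { assert (del - c * x = 0) by nra. lra. }
  exists e, c. unfold del in Hd0. repeat split; auto; try lra.
  rewrite Hb. replace d with (2 * e - a) by lra. replace a with (e + c * x) by lra. ring.
Qed.

Lemma ff_mob_top p x e c : 0 < x -> e * e = 1 -> ma p = e + c * x -> md p = e - c * x ->
  mb p = - (c * x ^ 2) -> mc p = c ->
  ff x (mob p (0, x)) = (1 - 2 * (e * c * x)) / (2 * x).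
Proof.
  intros Hx He Ha Hd Hb Hc. unfold ff, mob, mdet. cbn [fst snd].
  rewrite Ha, Hb, Hc, Hd.
  set (den := (c * 0 + (e - c * x)) ^ 2 + (c * x) ^ 2).
  assert (Hden : den = 1 - 2 * (e * c * x) + 2 * (c * x) ^ 2).
  { unfold den. transitivity (e * e - 2 * (e * c * x) + 2 * (c * x) ^ 2); [ring| rewrite He; ring]. }
  assert (Hdp : 0 < den).
  { unfold den. destruct (Req_dec (c * x) 0) as [Z|Z].
    - rewrite Z. replace (c * 0 + (e - 0)) with e by ring. nra.
    - assert (0 < (c * x) ^ 2) by (apply pow2_gt_0; auto).
      assert (0 <= (c * 0 + (e - c * x)) ^ 2) by apply pow2_ge_0. lra. }
  assert (Hdt : (e + c * x) * (e - c * x) - - (c * x ^ 2) * c = 1).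
  { transitivity (e * e); [ring|auto]. }
  rewrite Hdt.
  clearbody den.
  transitivity ((den - 2 * (c * x) ^ 2) / (2 * x)).
  { field. split; lra. }
  rewrite Hden. field. lra.
Qed.

Lemma geom p x r t l : parabolic p -> fixes_real p x -> 0 < x -> 0 < r ->
  tangent_to_pair x r p t -> horo_length x r p l ->
  x = exp t /\ 0 <= l /\ exists e, e * e = 1 /\ ma p = e * (1 + l / 2) /\
    mb p = - (e * x * (l / 2)) /\ mc p = e * (l / 2) / x /\ md p = e * (1 - l / 2).
Proof.
  intros Hpar Hfix Hx Hr [Ht0 [l' [gam [v1 [v2 [s0 [Hpp [Hg0 [Hv1 Hv2]]]]]]]]] Hhl.
  destruct Hpp as [Hal [Hl' Hmap]].
  pose proof (circle_tangent _ _ _ _ _ Hal s0) as T0.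
  rewrite Hg0, Hv1, Hv2 in T0. unfold ray_inf in T0. cbn [fst snd] in T0.
  pose proof (exp_pos t) as Hexp.
  assert (Hrt : r = exp t) by nra.
  destruct Hal as [Hon Hrest]. pose proof (Hon s0) as [_ C0]. rewrite Hg0 in C0.
  unfold ray_inf in C0; cbn [fst snd] in C0.
  assert (Hxr : x = r).
  { rewrite Hrt in C0. replace (exp t - exp t) with 0 in C0 by ring.
    assert ((x - r) * (x + r) = 0) by nra. apply Rmult_integral in H. lra. }
  subst r. rewrite <- Hxr in Hon, Hrest, Hhl, Hv2.
  assert (Hal : arclength_param x x gam v1 v2) by exact (conj Hon Hrest).
  clear Hon Hrest.
  split; [lra|].
  destruct (mat_form p x Hpar Hfix) as [e [c [He [Ha [Hd [Hb Hc]]]]]].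
  set (h := e * c * x).
  assert (Ftop := ff_mob_top p x e c Hx He Ha Hd Hb Hc). fold h in Ftop.
  assert (F0 : ff x (0, x) = / (2 * x)) by (unfold ff; cbn [fst snd]; field; lra).
  assert (Hg0' : gam s0 = (0, x)) by (rewrite Hg0; unfold ray_inf; rewrite <- Hxr; reflexivity).
  pose proof (ff_derive x gam v1 v2 Hx Hal) as FD.
  pose proof (dff_vals x gam v1 v2 Hx Hal) as FV.
  assert (D0 : dff x gam v1 v2 s0 = - / (2 * x)).
  { unfold dff. rewrite Hg0', Hv1, Hv2. cbn [fst snd]. field. lra. }
  assert (Dall : forall s, s0 <= s -> dff x gam v1 v2 s = - / (2 * x)).
  { intros s Hs. destruct (FV s) as [P|P]; auto. exfalso.
    assert (Hk : 0 < / (2 * x)) by (apply Rinv_0_lt_compat; lra).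
    destruct (Req_dec s s0) as [->|Hne]. lra.
    destruct (darboux0 _ _ s0 s FD ltac:(lra) ltac:(lra) ltac:(lra)) as [c0 [_ Z]].
    destruct (FV c0); lra. }
  destruct (mvt_pt _ _ s0 (s0 + l') FD ltac:(lra)) as [xi [Hxi Em]].
  rewrite Dall in Em by lra.
  rewrite <- Hmap, Hg0', Ftop, F0 in Em.
  assert (Hh : h = l' / 2).
  { replace (s0 + l' - s0) with l' in Em by ring.
    assert (EE : (1 - 2 * h) / (2 * x) - / (2 * x) = - (h / x)) by (field; lra).
    rewrite EE in Em.
    assert (Q : h / x = l' / (2 * x)) by (unfold Rdiv; lra).
    transitivity ((h / x) * x); [field; lra|]. rewrite Q. field; lra. }
  destruct Hhl as [gam2 [w1 [w2 [Hal2 [Hl0 Hmap2]]]]].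
  assert (Hs1 : exists s1, gam2 s1 = (0, x)).
  { destruct Hal2 as [_ [Hsurj _]]. apply Hsurj. split; unfold inH; cbn [fst snd]; [lra|ring]. }
  destruct Hs1 as [s1 Hs1].
  pose proof (ff_derive x gam2 w1 w2 Hx Hal2) as FD2.
  pose proof (dff_vals x gam2 w1 w2 Hx Hal2) as FV2.
  destruct (mvt_pt _ _ s1 (s1 + l) FD2 ltac:(lra)) as [xi2 [_ Em2]].
  rewrite <- Hmap2, Hs1, Ftop, F0 in Em2.
  assert (Hh2 : h = l / 2).
  { replace (s1 + l - s1) with l in Em2 by ring.
    assert (EE : (1 - 2 * h) / (2 * x) - / (2 * x) = - (h / x)) by (field; lra).
    rewrite EE in Em2.
    destruct (FV2 xi2) as [P|P]; rewrite P in Em2.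
    - assert (Q : h / x = - (l / (2 * x))) by (unfold Rdiv; lra).
      assert (h = - (l / 2)).
      { transitivity ((h / x) * x); [field; lra|]. rewrite Q. field; lra. }
      lra.
    - assert (Q : h / x = l / (2 * x)) by (unfold Rdiv; lra).
      transitivity ((h / x) * x); [field; lra|]. rewrite Q. field; lra. }
  split; auto.
  exists e. split; auto.
  assert (Hcx : c * x = e * h) by (unfold h; transitivity ((e * e) * c * x); [rewrite He; ring|ring]).
  rewrite <- Hh2.
  repeat split.
  - rewrite Ha, Hcx. ring.
  - rewrite Hb. replace (c * x ^ 2) with ((c * x) * x) by ring. rewrite Hcx. ring.
  - rewrite Hc. apply Rmult_eq_reg_r with x; [|lra]. unfold Rdiv. rewrite Rmult_assoc, Rinv_l by lra.
    rewrite Rmult_1_r. rewrite Hcx. reflexivity.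
  - rewrite Hd, Hcx. ring.
Qed.

Definition Inv (w : pt) (xx : R) : Prop := 0 <= fst w /\ fst w ^ 2 + snd w ^ 2 <= xx ^ 2 /\ 0 < snd w.

Lemma step_full (p : mat) (e l xx : R) (w : pt) :
  e * e = 1 -> 0 <= l -> 0 < xx -> Inv w xx ->
  ma p = e * (1 + l / 2) -> mb p = - (e * xx * (l / 2)) -> mc p = e * (l / 2) / xx -> md p = e * (1 - l / 2) ->
  Inv (mob (minv p) w) xx /\
  0 <= - ln (snd (mob (minv p) w)) - - ln (snd w) <= l.
Proof.
  intros He Hl Hx [H1 [H2 H3]] Ha Hb Hc Hd.
  destruct w as [X Y]. cbn [fst snd] in *.
  destruct (step_lemma p e (l / 2) xx X Y He ltac:(lra) Hx H3 H1 H2 Ha Hb Hc Hd) as [K1 [K2 [K3 [N [EN [N1 N2]]]]]].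
  split. split; [|split]; auto.
  set (Y' := snd (mob (minv p) (X, Y))) in *.
  assert (L : - ln Y' - - ln Y = ln N).
  { rewrite EN, ln_mult by lra. ring. }
  rewrite L. split.
  - rewrite <- ln_1. apply ln_le; lra.
  - assert (N <= exp l).
    { pose proof (exp_ge_taylor l 2 Hl) as T. simpl in T.
      assert (1 + 2 * (l / 2) + 2 * (l / 2) ^ 2 = 1 + l + l ^ 2 / 2) by field.
      assert (l * (l * 1) / (1 + 1) = l ^ 2 / 2) by field. lra. }
    rewrite <- (ln_exp l). apply ln_le; lra.
Qed.

Lemma x_strict (x : nat -> R) : (forall n, x n < x (S n)) -> forall m n, (m < n)%nat -> x m < x n.
Proof.
  intros Hx m n Hmn. induction n. lia.
  destruct (Nat.eq_dec m n) as [->|Hne]. apply Hx.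
  specialize (IHn ltac:(lia)). specialize (Hx n). lra.
Qed.

Lemma sum_le_series (E : nat -> R) : (forall n, 0 <= E n) -> ex_series E ->
  forall n, sum_n E n <= Series E.
Proof.
  intros Hp Hex n.
  assert (Mono : forall m, sum_n E n <= sum_n E (m + n)).
  { induction m. simpl; lra. simpl. rewrite sum_Sn. specialize (Hp (S (m + n))). 
    change (plus (sum_n E (m + n)) (E (S (m + n)))) with (sum_n E (m + n) + E (S (m + n))). lra. }
  pose proof (Series_correct E Hex) as HS.
  assert (Hl : is_lim_seq (sum_n E) (Series E)) by exact HS.
  apply (is_lim_seq_incr_n _ n) in Hl.
  assert (R0 : Rbar_le (sum_n E n) (Series E)).
  { apply (is_lim_seq_le (fun _ => sum_n E n) (fun m => sum_n E (m + n)) (sum_n E n) (Series E)); auto.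
    apply is_lim_seq_const. }
  exact R0.
Qed.

Theorem mainTheorem8
  (G : mat -> Prop)
  (p : nat -> mat) (x r t ell : nat -> R)
  (HG : fuchsian G) (HGtf : torsion_free G)
  (Hp : forall n, G (p n) /\ parabolic (p n) /\ fixes_real (p n) (x n))
  (Hr : forall n, 0 < r n)
  (Htan : forall n, tangent_to_pair (x n) (r n) (p n) (t n))
  (Ht0 : forall n, 0 <= t n)
  (Htinc : forall n, t n <= t (S n))
  (Htlim : is_lim_seq t p_infty)
  (Hx0 : forall n, 0 < x n)
  (Hxinc : forall n, x n < x (S n))
  (Hxlim : is_lim_seq x p_infty)
  (Hdisj : forall m n z, m <> n ->
      in_horoball (x m) (r m) z -> in_horoball (x n) (r n) z -> False)
  (Hell : forall n, horo_length (x n) (r n) (p n) (ell n))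
  (Hell0 : is_lim_seq ell 0)
  (k : nat -> nat) (Hk : forall n, (k n < k (S n))%nat)
  (Hsum : ex_series (fun n => ell (k n))) :
  let alpha := fun n => p (k n) in
  let beta := prod_upto alpha in
  let rr := fun n => busemann_inf (mob (minv (beta n)) i_pt) i_pt in
  exists r_alpha : R,
    is_lim_seq rr r_alpha /\
    (forall n, Rabs (rr n) <= Series (fun i => ell (k i))) /\
    Rabs r_alpha <= Series (fun i => ell (k i)).
Proof.
  intros alpha beta rr.
  assert (GE : forall n, x (k n) = exp (t (k n)) /\ 0 <= ell (k n) /\ exists e, e * e = 1 /\
      ma (alpha n) = e * (1 + ell (k n) / 2) /\ mb (alpha n) = - (e * x (k n) * (ell (k n) / 2)) /\
      mc (alpha n) = e * (ell (k n) / 2) / x (k n) /\ md (alpha n) = e * (1 - ell (k n) / 2)).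
  { intros n. destruct (Hp (k n)) as [_ [Hpar Hfix]].
    apply (geom (p (k n)) (x (k n)) (r (k n)) (t (k n)) (ell (k n))); auto. }
  assert (X1 : forall n, 1 <= x (k n)).
  { intros n. destruct (GE n) as [E _]. rewrite E. pose proof (exp_ineq1_le (t (k n))). pose proof (Ht0 (k n)). lra. }
  assert (Xmono : forall n, x (k n) <= x (k (S n))).
  { intros n. left. apply x_strict; auto. }
  assert (Det : forall n, mdet (alpha n) = 1).
  { intros n. destruct (Hp (k n)) as [_ [[D _] _]]. exact D. }
  assert (DetB : forall n, mdet (beta n) = 1).
  { induction n. apply Det. change (beta (S n)) with (mmul (beta n) (alpha (S n))).
    rewrite mdet_mmul, IHn, Det. ring. }
  set (z := fun n => mob (minv (beta n)) i_pt).
  assert (Hi : inH i_pt) by (unfold inH, i_pt; simpl; lra).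
  assert (Zrec : forall n, z (S n) = mob (minv (alpha (S n))) (z n)).
  { intros n. unfold z. change (beta (S n)) with (mmul (beta n) (alpha (S n))).
    rewrite minv_mmul. apply mob_mmul; auto; rewrite mdet_minv; auto. }
  assert (Z0 : z 0%nat = mob (minv (alpha 0%nat)) i_pt) by reflexivity.
  assert (STEP : forall n w, Inv w (x (k n)) ->
     Inv (mob (minv (alpha n)) w) (x (k n)) /\
     0 <= - ln (snd (mob (minv (alpha n)) w)) - - ln (snd w) <= ell (k n)).
  { intros n w Hw. destruct (GE n) as [_ [Hl [e [He [Ha [Hb [Hc Hd]]]]]]].
    pose proof (X1 n). apply step_full with e; auto; lra. }
  assert (Inv0 : Inv i_pt (x (k 0%nat))).
  { unfold Inv, i_pt; simpl. pose proof (X1 0%nat). nra. }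
  assert (INV : forall n, Inv (z n) (x (k n))).
  { induction n.
    - rewrite Z0. apply STEP; auto.
    - rewrite Zrec. apply STEP.
      destruct IHn as [A [B C]]. split; [|split]; auto.
      pose proof (Xmono n). pose proof (X1 n). nra. }
  assert (RR : forall n, rr n = - ln (snd (z n))).
  { intros n. unfold rr. apply busemann_val. apply INV. }
  set (D := fun n => match n with O => rr O | S m => rr (S m) - rr m end).
  assert (Dbd : forall n, 0 <= D n <= ell (k n)).
  { intros [|n].
    - simpl. rewrite RR, Z0. destruct (STEP 0%nat i_pt Inv0) as [_ B].
      replace (snd i_pt) with 1 in B by reflexivity. rewrite ln_1 in B. lra.
    - simpl. rewrite !RR, Zrec. apply STEP. destruct (INV n) as [A [B C]]. split; [|split]; auto.
      pose proof (Xmono n). pose proof (X1 n). nra. }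
  assert (SUM : forall n, sum_n D n = rr n).
  { induction n. rewrite sum_O. reflexivity.
    rewrite sum_Sn, IHn. change (plus (rr n) (D (S n))) with (rr n + D (S n)). simpl. ring. }
  assert (Hex : ex_series D).
  { apply (ex_series_le D (fun n => ell (k n))); auto.
    intros n. change (norm (D n)) with (Rabs (D n)). rewrite Rabs_right. apply Dbd. destruct (Dbd n); lra. }
  assert (Hlim : is_lim_seq rr (Series D)).
  { apply is_lim_seq_ext with (u := sum_n D). exact SUM. exact (Series_correct D Hex). }
  assert (Hnn : forall n, 0 <= rr n).
  { intros n. rewrite <- SUM. induction n. rewrite sum_O. apply Dbd.
    rewrite sum_Sn. change (plus (sum_n D n) (D (S n))) with (sum_n D n + D (S n)). destruct (Dbd (S n)); lra. }
  assert (Hup : forall n, rr n <= Series (fun i => ell (k i))).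
  { intros n. rewrite <- SUM.
    assert (sum_n D n <= sum_n (fun i => ell (k i)) n).
    { induction n. rewrite !sum_O. apply Dbd. rewrite !sum_Sn.
      change (plus (sum_n D n) (D (S n))) with (sum_n D n + D (S n)).
      change (plus (sum_n (fun i => ell (k i)) n) (ell (k (S n)))) with (sum_n (fun i => ell (k i)) n + ell (k (S n))).
      destruct (Dbd (S n)); lra. }
    pose proof (sum_le_series (fun i => ell (k i)) (fun i => proj1 (proj2 (GE i))) Hsum n). lra. }
  exists (Series D). split; [exact Hlim|split].
  - intros n. rewrite Rabs_right by (apply Rle_ge, Hnn). apply Hup.
  - assert (A : Rbar_le 0 (Series D)).
    { apply (is_lim_seq_le (fun _ => 0) rr 0 (Series D)); auto. apply is_lim_seq_const. }
    assert (B : Rbar_le (Series D) (Series (fun i => ell (k i)))).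
    { apply (is_lim_seq_le rr (fun _ => Series (fun i => ell (k i)))); auto. apply is_lim_seq_const. }
    simpl in A, B. rewrite Rabs_right by lra. exact B.
Qed.
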